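(* Let $r\in\mathbb N$, $1<q<\infty$ and $t=r^{1/q}$. Then $K^{\mathcal M}_{q,r}=\mathcal N_t^{(q)}$.
   Context: $c_{00}$ denotes finitely supported real sequences and $(e_n)$ the unit vectors. $K^{\mathcal M}_{q,r}$ is the smallest subset of $c_{00}$ that contains all vectors $\pm e_n$ and has the property: whenever $y_1,\dots,y_l\in K^{\mathcal M}_{q,r}$ with $l\le r$ and pairwise disjoint supports, then $r^{-1/q}(y_1+\dots+y_l)\in K^{\mathcal M}_{q,r}$. For $\alpha>0$ let $C_\alpha=\{\pm\alpha^j: j\in\mathbb Z\}\cup\{0\}$, $\mathcal N_\alpha=\{x\in c_{00}: x(i)\in C_\alpha \text{ for all } i\}$, and $\mathcal N_\alpha^{(q)}=\mathcal N_\alpha\cap B_{\ell_q}$, where $B_{\ell_q}$ is the closed unit ball of $\ell_q$. *)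

(* Defs.v *)
From HB Require Import structures.
From mathcomp Require Import all_boot all_order all_algebra.
From mathcomp Require Import all_classical all_reals.
From mathcomp Require Import exp.
Set Implicit Arguments. Unset Strict Implicit. Unset Printing Implicit Defensive.
Import Order.TTheory GRing.Theory Num.Theory.
Local Open Scope ring_scope.

Section Defs.
Variable R : realType.

Definition c00 (x : nat -> R) : Prop :=
  exists N : nat, forall i : nat, (N <= i)%N -> x i = 0.

Definition unitv (n : nat) : nat -> R := fun i => (i == n)%:R.

Definition disjoint_supports (l : nat) (y : 'I_l -> nat -> R) : Prop :=
  forall (a b : 'I_l), a <> b -> forall i : nat, y a i = 0 \/ y b i = 0.

Inductive KM (q : R) (r : nat) : (nat -> R) -> Prop :=
| KM_pos n : KM q r (unitv n)
| KM_neg n : KM q r (fun i => - unitv n i)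
| KM_comb (l : nat) (y : 'I_l -> nat -> R) :
    (l <= r)%N -> (forall k, KM q r (y k)) -> disjoint_supports y ->
    KM q r (fun i => (r%:R) `^ (- q^-1) * \sum_(k < l) y k i).

Definition C_alpha (alpha : R) (v : R) : Prop :=
  v = 0 \/ exists j : int, v = alpha ^ j \/ v = - alpha ^ j.

Definition N_alpha (alpha : R) (x : nat -> R) : Prop :=
  c00 x /\ forall i : nat, C_alpha alpha (x i).

Definition in_ball_lq (q : R) (x : nat -> R) : Prop :=
  exists N : nat, (forall i : nat, (N <= i)%N -> x i = 0) /\
    \sum_(i < N) `|x i| `^ q <= 1.

Definition N_alpha_q (alpha q : R) (x : nat -> R) : Prop :=
  N_alpha alpha x /\ in_ball_lq q x.

End Defs.

(* Main.v *)
Require Import Defs.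
From mathcomp Require Import all_boot all_order all_algebra.
From mathcomp Require Import all_classical all_reals.
From mathcomp Require Import exp.
Import Order.TTheory GRing.Theory Num.Theory.
From mathcomp Require Import zify.
Set Implicit Arguments. Unset Strict Implicit. Unset Printing Implicit Defensive.


Lemma filter_all_eq (T : Type) (a P Q : pred T) (s : seq T) :
  all a s -> (forall x, a x -> P x = Q x) -> seq.filter P s = seq.filter Q s.
Proof.
move=> ha hPQ; elim: s ha => //= x s IH /andP [ax as_].
by rewrite (hPQ x ax) IH.
Qed.

Lemma big_all_eq (T V : Type) (idx : V) (op : V -> V -> V) (a : pred T)
  (F G : T -> V) (s : seq T) :
  all a s -> (forall x, a x -> F x = G x) ->
  \big[op/idx]_(x <- s) F x = \big[op/idx]_(x <- s) G x.
Proof.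
move=> ha hFG; elim: s ha => [|x s IH /andP [ax as_]]; first by rewrite !big_nil.
by rewrite !big_cons (hFG x ax) IH.
Qed.

Lemma all_takeW (T : Type) (a : pred T) n s : all a s -> all a (take n s).
Proof. by rewrite -{1}(cat_take_drop n s) all_cat => /andP []. Qed.

Lemma all_dropW (T : Type) (a : pred T) n s : all a s -> all a (drop n s).
Proof. by rewrite -{1}(cat_take_drop n s) all_cat => /andP []. Qed.

Lemma all_filterW (T : Type) (a P : pred T) s : all a s -> all a (seq.filter P s).
Proof.
elim: s => //= x s IH /andP [ax as_]; case: (P x) => /=; rewrite ?ax IH //.
Qed.

Lemma count_big (T : Type) (a : pred T) s : count a s = \sum_(x <- s) (a x : nat).
Proof. by elim: s => [|x s IH]; rewrite ?big_nil ?big_cons //= IH. Qed.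

Fixpoint allK (T : Type) (P : T -> Prop) (s : seq T) : Prop :=
  match s with [::] => True | x :: s' => P x /\ allK P s' end.

Lemma allK_cat (T : Type) (P : T -> Prop) s1 s2 :
  allK P (s1 ++ s2) <-> allK P s1 /\ allK P s2.
Proof. by elim: s1 => [|x s IH] /=; [tauto|move: IH; tauto]. Qed.

Lemma allK_filter (T : Type) (P : T -> Prop) (a : pred T) s :
  allK P s -> allK P (seq.filter a s).
Proof. by elim: s => //= x s IH [px ps]; case: (a x) => /=; auto. Qed.

Lemma allK_take (T : Type) (P : T -> Prop) n s : allK P s -> allK P (take n s).
Proof.
move=> h; have := proj1 (allK_cat P (take n s) (drop n s)).
by rewrite cat_take_drop => /(_ h) [].
Qed.

Lemma allK_drop (T : Type) (P : T -> Prop) n s : allK P s -> allK P (drop n s).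
Proof.
move=> h; have := proj1 (allK_cat P (take n s) (drop n s)).
by rewrite cat_take_drop => /(_ h) [].
Qed.

Lemma allK_nth (T : Type) (P : T -> Prop) x0 s k :
  allK P s -> (k < size s)%N -> P (nth x0 s k).
Proof.
elim: s k => //= x s IH [|k] [px ps] //= hk.
exact: IH.
Qed.

Lemma count_two (T : Type) (a : pred T) x0 s i j :
  (count a s <= 1)%N -> (i < j)%N -> (j < size s)%N ->
  a (nth x0 s i) -> a (nth x0 s j) -> False.
Proof.
elim: s i j => //= x s IH [|i] [|j] //= hc hij hj hi hj'.
  rewrite hi /= in hc.
  have : has a s by apply/(has_nthP x0); exists j.
  by rewrite has_count; move: hc; case: (count a s).
apply: (IH i j) => //.
by apply: leq_trans hc; rewrite leq_addl.
Qed.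

Lemma big_split_key (T V : Type) (idx : V) (op : Monoid.com_law idx)
  (key : T -> nat) (M : nat) (F : T -> V) (s : seq T) :
  all (fun x => key x <= M)%N s ->
  \big[op/idx]_(x <- s) F x =
  op (\big[op/idx]_(x <- seq.filter (fun x => key x == M) s) F x)
     (\big[op/idx]_(x <- seq.filter (fun x => (key x < M)%N) s) F x).
Proof.
move=> h; rewrite (bigID (fun x => key x == M)) /= !big_filter.
congr (op _ _).
rewrite -[LHS]big_filter -[RHS]big_filter.
rewrite (@filter_all_eq _ _ _ (fun x => (key x < M)%N) _ h) //.
by move=> x hx /=; rewrite ltn_neqAle hx andbT.
Qed.

Lemma sum_const_seq (T : Type) (s : seq T) (k : nat) :
  (\sum_(x <- s) k = size s * k)%N.
Proof. by elim: s => [|x s IH]; rewrite ?big_nil ?big_cons //= IH mulSn. Qed.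

Lemma add_dvd_le (d a b : nat) : (d %| a -> d %| b -> a < b -> a + d <= b)%N.
Proof.
move=> /dvdnP [a' ->] /dvdnP [b' ->] hab.
have [dz|dpos] := posnP d; first by rewrite dz !muln0 in hab.
have h : (a' < b')%N by rewrite -(ltn_pmul2r dpos).
by rewrite -mulSnr leq_pmul2r.
Qed.

Local Open Scope ring_scope.

Definition tq (R : realType) (r : nat) (q : R) : R := (r%:R) `^ (q^-1).
Arguments tq {R}.

Lemma tq_gt0 {R : realType} (r : nat) (q : R) : (0 < r)%N -> 0 < tq r q.
Proof. by move=> hr; rewrite /tq powR_gt0 // ltr0n. Qed.

Lemma tq_powq {R : realType} (r : nat) (q : R) : 0 < q -> tq r q `^ q = r%:R.
Proof.
by move=> hq; rewrite /tq -powRrM mulVf ?gt_eqF // powRr1 // ler0n.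
Qed.

Lemma rpow_neg {R : realType} (r : nat) (q : R) : r%:R `^ (- q^-1) = (tq r q)^-1.
Proof. by rewrite powRN. Qed.

Lemma powR_exprn {R : realType} (a p : R) (k : nat) : 0 <= a -> (a ^+ k) `^ p = (a `^ p) ^+ k.
Proof.
move=> ha; rewrite -powR_mulrn // -powRrM mulrC powRrM powR_mulrn //.
exact: powR_ge0.
Qed.

Lemma powR_invf {R : realType} (a p : R) : 0 < a -> (a^-1) `^ p = (a `^ p)^-1.
Proof.
move=> ha; rewrite -powR_inv1 ?ltW // -powRrM mulrC powRrM powR_inv1 //.
exact: powR_ge0.
Qed.

Lemma tq_depth {R : realType} (r : nat) (q : R) (k : nat) : (0 < r)%N -> 0 < q ->
  ((tq r q ^+ k)^-1) `^ q = (r%:R ^+ k)^-1.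
Proof.
move=> hr hq; rewrite powR_invf ?exprn_gt0 ?tq_gt0 //.
by rewrite powR_exprn ?tq_powq // ltW // tq_gt0.
Qed.

Lemma disj_cases {R : realType} l (f : 'I_l -> R) :
  (forall a b, a <> b -> f a = 0 \/ f b = 0) ->
  (forall k, f k = 0) \/ exists k0, forall k, k != k0 -> f k = 0.
Proof.
move=> hd; have [/existsP [k0 hk0]|/existsPn hn] := boolP [exists k, f k != 0].
  right; exists k0 => k /eqP hk; case: (hd k k0 hk) => // h.
  by rewrite h eqxx in hk0.
by left => k; apply/eqP; move: (hn k); rewrite negbK.
Qed.

Lemma sum_one {R : realType} {T : realType} l (f : 'I_l -> R) (G : R -> T) (k0 : 'I_l) :
  G 0 = 0 -> (forall k, k != k0 -> f k = 0) -> \sum_k G (f k) = G (f k0).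
Proof.
move=> G0 h; rewrite (bigD1 k0) //= big1 ?addr0 // => k hk.
by rewrite h.
Qed.

Lemma disj_sumG {R : realType} l (f : 'I_l -> R) (G : R -> R) :
  G 0 = 0 -> (forall a b, a <> b -> f a = 0 \/ f b = 0) ->
  \sum_k G (f k) = G (\sum_k f k).
Proof.
move=> G0 hd; case: (disj_cases hd) => [h0|[k0 hk0]].
  by rewrite big1 ?G0 ?big1 // => k _; rewrite h0 ?G0.
by rewrite (sum_one G0 hk0) (sum_one (G:=id) erefl hk0).
Qed.

Definition entry_ok {R : realType} (t v : R) :=
  v = 0 \/ exists k : nat, v = (t ^+ k)^-1 \/ v = - (t ^+ k)^-1.

Lemma sum_le1 {R : realType} l (f : 'I_l -> R) (G : R -> R) :
  G 0 = 0 -> (forall a b, a <> b -> f a = 0 \/ f b = 0) ->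
  (forall k, G (f k) <= 1) -> \sum_k G (f k) <= 1.
Proof.
move=> G0 hd hb; case: (disj_cases hd) => [h0|[k0 hk0]].
  by rewrite big1 // => k _; rewrite h0 G0.
by rewrite (sum_one G0 hk0).
Qed.

Lemma KM_fwd {R : realType} (r : nat) (q : R) : (0 < r)%N -> 0 < q ->
  forall x, KM q r x ->
  [/\ c00 x, (forall i, entry_ok (tq r q) (x i)) &
      (forall N, \sum_(i < N) `|x i| `^ q <= 1)].
Proof.
move=> hr hq; have G0 : `|0 : R| `^ q = 0 by rewrite normr0 powR0 // gt_eqF.
have hdisj : forall n N (a b : 'I_N), a <> b -> ((a:nat) == n) = false \/ ((b:nat) == n) = false.
  move=> n N a b hab; case: (eqVneq (a:nat) n) => ha; [right|by left]; apply/eqP => hb.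
  by apply: hab; apply: val_inj; rewrite /= ha hb.
move=> x; elim=> [n|n|l y hl _ IH hd].
- split.
  + by exists n.+1 => i hi; rewrite /unitv; case: eqP => // e; rewrite e ltnn in hi.
  + move=> i; rewrite /unitv; case: eqP => _; last by left.
    by right; exists 0%N; left; rewrite expr0 invr1.
  + move=> N; apply: (@sum_le1 R N (fun i : 'I_N => unitv R n i) (fun v => `|v| `^ q) G0).
      by move=> a b /(hdisj n) []; rewrite /unitv => ->; [left|right]; rewrite ?oppr0.
    by move=> k; rewrite /unitv; case: eqP => _; rewrite ?G0 // normr1 powR1.
- split.
  + by exists n.+1 => i hi; rewrite /unitv; case: eqP => [hin|]; [rewrite hin ltnn in hi|rewrite oppr0].
  + move=> i; rewrite /unitv; case: eqP => _; last by left; rewrite oppr0.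
    by right; exists 0%N; right; rewrite expr0 invr1.
  + move=> N; apply: (@sum_le1 R N (fun i : 'I_N => - unitv R n i) (fun v => `|v| `^ q) G0).
      by move=> a b /(hdisj n) []; rewrite /unitv => ->; [left|right]; rewrite ?oppr0.
    by move=> k; rewrite /unitv; case: eqP => _; rewrite ?oppr0 ?G0 // normrN normr1 powR1.
- have [Nf hNf] := boolp.choice (fun k => match IH k with And3 a _ _ => a end).
  have hdi : forall i (a b : 'I_l), a <> b -> y a i = 0 \/ y b i = 0.
    by move=> i a b hab; exact: hd.
  have ht := tq_gt0 q hr.
  have hB : forall k N, \sum_(i<N) `|y k i| `^ q <= 1 by move=> k; case: (IH k).
  rewrite rpow_neg; split.
  + exists (\sum_k Nf k)%N => i hi.
    have -> : \sum_k y k i = 0.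
      apply: big1 => k _.
      apply: hNf; apply: leq_trans hi; rewrite (bigD1 k) //= leq_addr.
    by [].
    by rewrite mulr0.
  + move=> i; case: (disj_cases (hdi i)) => [h0|[k0 hk0]].
      by left; rewrite big1 ?mulr0.
    rewrite (sum_one (G:=id) erefl hk0) /=.
    case: (IH k0) => _ he _; case: (he i) => [->|[m [->|->]]].
    * by left; rewrite mulr0.
    * by right; exists m.+1; left; rewrite exprS invfM.
    * by right; exists m.+1; right; rewrite exprS invfM mulrN.
  + move=> N.
    have e1 : forall i, `| (tq r q)^-1 * \sum_k y k i| `^ q = (r%:R)^-1 * \sum_k `|y k i| `^ q.
      move=> i; rewrite normrM powRM // normfV (gtr0_norm ht).
      rewrite powR_invf // tq_powq //.
      by congr (_ * _); rewrite (disj_sumG (G := fun v => `|v| `^ q) G0 (hdi i)).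
    under eq_bigr do rewrite e1.
    rewrite -mulr_sumr exchange_big /=.
    apply: (@le_trans _ _ (r%:R^-1 * l%:R)).
      rewrite ler_wpM2l ?invr_ge0 ?ler0n //.
      apply: le_trans (ler_sum _ (fun k _ => hB k N)) _.
      by rewrite sumr_const card_ord.
    apply: (@le_trans _ _ (r%:R^-1 * r%:R)).
      by rewrite ler_wpM2l ?invr_ge0 ?ler0n // ler_nat.
    by rewrite mulVf // pnatr_eq0 -lt0n.
Qed.



Definition valL {R : realType} (t : R) (L : seq (nat * (nat -> R))) (i : nat) : R :=
  \sum_(p <- L) (t ^+ p.1)^-1 * p.2 i.
Definition wt {R : realType} (r D : nat) (L : seq (nat * (nat -> R))) : nat :=
  (\sum_(p <- L) r ^ (D - p.1))%N.
Definition meas {R : realType} (L : seq (nat * (nat -> R))) : nat :=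
  (\sum_(p <- L) (p.1).+1)%N.
Definition nzc {R : realType} (i : nat) : pred (nat * (nat -> R)) := fun p => p.2 i != 0.
Definition maxd {R : realType} (L : seq (nat * (nat -> R))) : nat :=
  foldr (fun p m => maxn p.1 m) 0%N L.

Lemma maxd_all {R : realType} (L : seq (nat * (nat -> R))) :
  all (fun p => p.1 <= maxd L)%N L.
Proof.
elim: L => //= p L IH; rewrite leq_maxl /=.
by apply: sub_all IH => x hx; exact: leq_trans hx (leq_maxr _ _).
Qed.

Lemma maxd_has {R : realType} (L : seq (nat * (nat -> R))) :
  (0 < maxd L)%N -> has (fun p => p.1 == maxd L) L.
Proof.
elim: L => //= p L IH hpos.
have [h|h] := leqP p.1 (maxd L).
  by rewrite (maxn_idPr h) in hpos *; apply/orP; right; exact: IH.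
by rewrite eqxx.
Qed.

Lemma sum_zero_nohas {R : realType} (L : seq (nat * (nat -> R))) i :
  ~~ has (nzc i) L -> \sum_(p <- L) p.2 i = 0.
Proof.
elim: L => [|p L IH]; rewrite ?big_nil // big_cons /= negb_or => /andP [hp hL].
by rewrite IH // addr0; move: hp; rewrite /nzc negbK => /eqP.
Qed.

Lemma KM_ext {R : realType} (q : R) r (x y : nat -> R) :
  (forall i, x i = y i) -> KM q r x -> KM q r y.
Proof. by move=> h; have -> : y = x by apply: boolp.funext => i; rewrite h. Qed.

Lemma KM0 {R : realType} (q : R) r : KM q r (fun _ => 0).
Proof.
apply: (KM_ext _ (@KM_comb R q r 0 (fun _ _ => 0) (leq0n r) _ _)).
- by move=> i; rewrite big_ord0 mulr0.
- by case.
- by case.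
Qed.

Lemma list_comb {R : realType} (q : R) r (T : seq (nat * (nat -> R))) :
  (size T <= r)%N -> allK (fun p => KM q r p.2) T ->
  (forall i, count (nzc i) T <= 1)%N ->
  KM q r (fun i => r%:R `^ (- q^-1) * \sum_(p <- T) p.2 i).
Proof.
move=> hs hK hc; set d := (0%N, fun _ : nat => 0 : R).
apply: (KM_ext _ (@KM_comb R q r (size T) (fun k : 'I_(size T) => (nth d T k).2) hs _ _)).
- by move=> i /=; rewrite [in RHS](big_nth d) big_mkord.
- by move=> k; exact: (allK_nth (P := fun p => KM q r p.2) d hK (ltn_ord k)).
- move=> a b hab i.
  case: (eqVneq ((nth d T a).2 i) 0) => ha; first by left.
  case: (eqVneq ((nth d T b).2 i) 0) => hb; first by right.
  exfalso; case: (ltngtP a b) => h.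
  + by apply: (@count_two _ (nzc i) d T a b (hc i) h (ltn_ord b)); rewrite /nzc.
  + by apply: (@count_two _ (nzc i) d T b a (hc i) h (ltn_ord a)); rewrite /nzc.
  + by apply: hab; apply: val_inj.
Qed.

Lemma flat_case {R : realType} (q : R) r D (L : seq (nat * (nat -> R))) :
  (0 < r)%N -> all (fun p => p.1 == 0%N) L -> (wt r D L <= r ^ D)%N ->
  allK (fun p => KM q r p.2) L -> forall t, KM q r (valL t L).
Proof.
move=> hr h0 hw hK t.
have : (size L <= 1)%N.
  move: hw; rewrite /wt (@big_all_eq _ _ 0%N addn _ _ (fun _ => expn r D) _ h0); last first.
    by move=> p /eqP ->; rewrite subn0.
  by rewrite sum_const_seq -{2}(mul1n (expn r D)) leq_pmul2r // expn_gt0 hr.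
case: L h0 hK {hw} => [|p [|p' L]] //= h0 hK _.
- by apply: (KM_ext _ (KM0 q r)) => i; rewrite /valL big_nil.
- apply: (KM_ext _ (proj1 hK)) => i; rewrite /valL big_cons big_nil addr0.
  by move/andP: h0 => [/eqP -> _]; rewrite expr0 invr1 mul1r.
Qed.

Lemma merge_main {R : realType} (q : R) r : (0 < r)%N -> 0 < q ->
  forall n (L : seq (nat * (nat -> R))) D, (meas L <= n)%N ->
  allK (fun p => KM q r p.2) L -> (forall i, count (nzc i) L <= 1)%N ->
  all (fun p => p.1 <= D)%N L -> (wt r D L <= r ^ D)%N ->
  KM q r (valL (tq r q) L).
Proof.
move=> hr hq n; elim: n => [|n IH] L D hm hK hc hD hw.
  case: L hm hK hc hD hw => [|p L]; last by rewrite /meas big_cons.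
  by move=> *; apply: (KM_ext _ (KM0 q r)) => i; rewrite /valL big_nil.
set M := maxd L.
have [hM0|hMpos] := posnP M.
  apply: (@flat_case R q r D L hr _ hw hK).
  by have := maxd_all L; rewrite -/M hM0; apply: sub_all => p; rewrite leqn0.
have hall := maxd_all L; rewrite -/M in hall.
have hhas := maxd_has hMpos; rewrite -/M in hhas.
set L1 := seq.filter (fun p => p.1 == M) L.
set L2 := seq.filter (fun p => (p.1 < M)%N) L.
set T := take r L1.
set Dr := drop r L1.
have hsplit := fun V idx (op : Monoid.com_law idx) F => @big_split_key _ V idx op fst M F L hall.
have hL1 : L1 = T ++ Dr by rewrite cat_take_drop.
have hTall : all (fun p => p.1 == M) T := all_takeW r (filter_all _ L).
have hDrall : all (fun p => p.1 == M) Dr := all_dropW r (filter_all _ L).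
have hszL1 : (0 < size L1)%N by rewrite size_filter -has_count.
have hMD : (M <= D)%N.
  move/(has_nthP (0%N, fun _ => 0)): hhas => [k hk /eqP <-].
  by move/(all_nthP (0%N, fun _ => 0)): hD => /(_ k hk).
have hszT : (0 < size T)%N by rewrite size_take_min leq_min hr hszL1.
have hszTr : (size T <= r)%N by rewrite size_take_min geq_minl.
set c := r%:R `^ (- q^-1).
set mg := (M.-1, fun i => c * \sum_(p <- T) p.2 i).
set L' := mg :: (Dr ++ L2).
have hcT : forall i, (count (nzc i) T + count (nzc i) Dr + count (nzc i) L2 = count (nzc i) L)%N.
  move=> i; rewrite -count_cat -hL1 !count_big [in RHS](hsplit _ _ addn).
  done.
have hKL1 : allK (fun p => KM q r p.2) L1 := allK_filter _ hK.
have hKmg : KM q r mg.2.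
  apply: list_comb => //; first exact: allK_take.
  by move=> i; apply: leq_trans (hc i); rewrite -(hcT i) -addnA leq_addr.
have eM : tq r q ^+ M = tq r q * tq r q ^+ M.-1 by rewrite -exprS prednK.
have hval : forall i, valL (tq r q) L' i = valL (tq r q) L i.
  move=> i; rewrite /valL big_cons big_cat /= [in RHS](hsplit _ _ +%R).
  rewrite -/L1 -/L2 hL1 big_cat /= addrA; congr (_ + _ + _).
  rewrite [RHS](@big_all_eq _ _ 0 +%R _ _ (fun p => (tq r q ^+ M)^-1 * p.2 i) _ hTall); last first.
    by move=> p /eqP ->.
  rewrite -mulr_sumr mulrA /c rpow_neg; congr (_ * _).
  by rewrite eM invfM mulrC.
apply: (KM_ext hval); apply: (IH L' D).
- have hmL : meas L = (meas T + meas Dr + meas L2)%N.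
    by rewrite /meas (hsplit _ _ addn) -/L1 -/L2 hL1 big_cat.
  have hmT : (M < meas T)%N.
    have gen : forall T0 : seq (nat * (nat -> R)), all (fun p => p.1 == M) T0 ->
        (0 < size T0)%N -> (M < meas T0)%N.
      by case=> [|p T'] //= /andP [/eqP hp _] _; rewrite /meas big_cons hp ltnS leq_addr.
    exact: gen.
  move: hm; rewrite hmL => hm; rewrite /meas big_cons big_cat /= -/(meas Dr) -/(meas L2) prednK //.
  lia.
- split => //.
  exact: (proj2 (allK_cat _ _ _) (conj (allK_drop r hKL1) (allK_filter _ hK))).
- move=> i; rewrite /= count_cat.
  have : (nzc i mg <= count (nzc i) T)%N.
    case: (boolP (has (nzc i) T)) => h.
      by rewrite has_count in h; apply: leq_trans (leq_b1 _) h.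
    by rewrite /nzc /= (sum_zero_nohas h) mulr0 eqxx.
  have := hcT i; have := hc i; lia.
- rewrite /= all_cat (leq_trans (leq_pred M) hMD) /=.
  by rewrite all_dropW ?all_filterW.
rewrite /wt big_cons big_cat /=.
set Q := expn r (D - M).
have hQ : (0 < Q)%N by rewrite /Q expn_gt0 hr.
have hwT : (\sum_(p <- T) expn r (D - p.1) = size T * Q)%N.
  rewrite (@big_all_eq _ _ 0%N addn _ _ (fun _ => Q) _ hTall) ?sum_const_seq //.
  by move=> p /eqP ->.
have hwDr : (\sum_(p <- Dr) expn r (D - p.1) = size Dr * Q)%N.
  rewrite (@big_all_eq _ _ 0%N addn _ _ (fun _ => Q) _ hDrall) ?sum_const_seq //.
  by move=> p /eqP ->.
have hwL : wt r D L = (size T * Q + size Dr * Q + \sum_(p <- L2) expn r (D - p.1))%N.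
  by rewrite /wt (hsplit _ _ addn) -/L1 -/L2 hL1 big_cat /= hwT hwDr.
have eQ : (expn r (D - M.-1) = Q * r)%N by rewrite /Q -expnSr; congr (expn _ _); lia.
rewrite eQ hwDr.
move: hw; rewrite hwL => hw.
case: (leqP r (size L1)) => hr1.
  have hsT : size T = r by rewrite size_takel.
  by move: hw; rewrite hsT mulnC; lia.
have eDr : Dr = [::] by rewrite /Dr drop_oversize // ltnW.
rewrite eDr /= mul0n add0n addnC.
rewrite eDr /= mul0n addn0 in hw.
apply: add_dvd_le.
- rewrite /L2 big_filter; apply: dvdn_sum => p hp.
  by rewrite /Q -expnSr dvdn_exp2l //; lia.
- by rewrite /Q -expnSr dvdn_exp2l //; lia.
- have : (0 < size T * Q)%N by rewrite muln_gt0 hszT hQ.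
  by move=> h; apply: leq_trans hw; rewrite addnC -addn1 leq_add2l.
Qed.



Lemma allK_map_filter (T U : Type) (P : U -> Prop) (f : T -> U) (a : pred T) s :
  (forall i, a i -> P (f i)) -> allK P (map f (seq.filter a s)).
Proof. by move=> h; elim: s => //= i s IH; case: ifP => hi //=; split; auto. Qed.

Lemma norm1_cases {R : realType} (v : R) : `|v| = 1 -> v = 1 \/ v = -1.
Proof.
move/eqP; rewrite eqr_norml => /andP [/orP [] /eqP -> _]; by [left|right].
Qed.

Lemma depth_exists {R : realType} (r : nat) (q : R) (x : nat -> R) N :
  (0 < r)%N -> 0 < q ->
  (forall i, C_alpha (tq r q) (x i)) ->
  (forall i, (N <= i)%N -> x i = 0) ->
  \sum_(i < N) `|x i| `^ q <= 1 ->
  forall i, exists k : nat, x i != 0 -> `|x i| = (tq r q ^+ k)^-1.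
Proof.
move=> hr hq hC hN hs i.
have ht := tq_gt0 q hr.
case: (eqVneq (x i) 0) => hxi; first by exists 0%N => /eqP; rewrite hxi.
have hi : (i < N)%N by rewrite ltnNge; apply/negP => /hN; apply/eqP.
have hb : `|x i| `^ q <= 1.
  apply: le_trans hs; rewrite (bigD1 (Ordinal hi)) //= lerDl.
  by apply: sumr_ge0 => j _; exact: powR_ge0.
case: (hC i) => [h0|[j hj]]; first by rewrite h0 eqxx in hxi.
have hnj : `|x i| = tq r q ^ j.
  by case: hj => ->; rewrite ?normrN gtr0_norm // exprz_gt0.
clear hj; case: j hnj => n hnj.
- case: n hnj => [|n] hnj.
    by exists 0%N => _; rewrite hnj expr0 invr1.
  have r1 : r = 1%N.
    move: hb; rewrite hnj.
    have -> : tq r q ^ (Posz n.+1) = tq r q ^+ n.+1 by [].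
    rewrite powR_exprn; last exact: ltW.
    rewrite tq_powq // -natrX lern1 => hb.
    apply/eqP; rewrite eqn_leq hr andbT; apply: leq_trans hb.
    by rewrite expnS leq_pmulr // expn_gt0 hr.
  exists 0%N => _; rewrite hnj /= /tq r1 powR1.
  by rewrite expr0 invr1; exact: (expr1n _ n.+1).
- by exists n.+1 => _; rewrite hnj NegzE -exprnN.
Qed.

Lemma N_to_KM {R : realType} (r : nat) (q : R) (x : nat -> R) :
  (0 < r)%N -> 0 < q -> N_alpha_q (tq r q) q x -> KM q r x.
Proof.
move=> hr hq [[_ hC] [N [hN hs]]].
have ht := tq_gt0 q hr.
have [kf hk] := boolp.choice (depth_exists hr hq hC hN hs).
set t := tq r q.
set s := seq.filter (fun i => x i != 0) (iota 0 N).
set D := (\max_(i < N) kf i)%N.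
have hkD : forall i, (i < N)%N -> (kf i <= D)%N.
  move=> i hi; rewrite /D; exact: (leq_bigmax (Ordinal hi)).
set L := [seq (kf i, fun m => x i * t ^+ kf i * unitv R i m) | i <- s].
have hv : forall m, valL t L m = x m.
  move=> m; rewrite /valL big_map /s big_filter.
  under eq_bigr do rewrite [x _ * _]mulrC !mulrA mulVf ?mul1r ?expf_neq0 ?gt_eqF //.
  rewrite big_mkcond /=.
  rewrite (eq_bigr (fun i => x i * unitv R i m)); last first.
    by move=> i _; case: (eqVneq (x i) 0) => [->|]; rewrite ?mul0r.
  case: (ltnP m N) => hmN.
    rewrite (bigD1_seq m) ?mem_iota ?iota_uniq //= /unitv eqxx mulr1 big1_seq ?addr0 //.
    by move=> i /andP [hi _]; rewrite eq_sym (negbTE hi) mulr0.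
  rewrite hN // big1_seq // => i /andP [_]; rewrite mem_iota => /andP [_ hi].
  by rewrite /unitv; case: eqP => [e|_]; [rewrite -e in hi; lia | rewrite mulr0].
apply: (KM_ext hv); apply: (merge_main hr hq (n := meas L) (D := D)) => //.
- rewrite /L /s; apply: allK_map_filter => i hxi /=.
  have h1 := hk i hxi.
  have : `|x i * t ^+ kf i| = 1.
    by rewrite normrM h1 gtr0_norm ?exprn_gt0 // mulVf ?expf_neq0 ?gt_eqF.
  case/norm1_cases => e.
    by apply: (KM_ext _ (@KM_pos R q r i)) => m; rewrite e mul1r.
  by apply: (KM_ext _ (@KM_neg R q r i)) => m; rewrite e mulN1r.
- move=> m; rewrite /L count_map /s count_filter.
  apply: (@leq_trans (count (pred1 m) (iota 0 N))).
    apply: sub_count => i /= /andP [h1 _]; move: h1; rewrite /nzc /= /unitv.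
    by case: (eqVneq i m) => // ne; rewrite mulr0 eqxx.
  by rewrite count_uniq_mem ?iota_uniq // leq_b1.
- rewrite /L all_map; apply: all_filterW.
  by apply/allP => i; rewrite mem_iota => /andP [_ hi] /=; exact: hkD.
- rewrite /wt big_map -(ler_nat R) natr_sum.
  under eq_bigr do rewrite natrX.
  have e : forall i, i \in s -> (r%:R : R) ^+ (D - kf i) = r%:R ^+ D * `|x i| `^ q.
    move=> i; rewrite mem_filter mem_iota => /andP [hxi /andP [_ hi]].
    rewrite (hk i hxi) tq_depth // -{2}(subnK (hkD i hi)) exprD mulfK //.
    by rewrite expf_neq0 // pnatr_eq0 -lt0n hr.
  rewrite (eq_big_seq _ e) -mulr_sumr natrX.
  rewrite -[X in _ <= X]mulr1 ler_wpM2l ?exprn_ge0 ?ler0n //.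
  apply: le_trans hs; rewrite le_eqVlt; apply/orP; left; apply/eqP.
  rewrite /s big_filter big_mkcond /=.
  have -> : iota 0 N = index_iota 0 N by rewrite /index_iota subn0.
  rewrite big_mkord; apply: eq_bigr => i _.
  by case: eqVneq => [->|] /=; rewrite ?normr0 ?powR0 // gt_eqF.
Qed.

Theorem mainTheorem2 (R : realType) (r : nat) (q : R) :
  (0 < r)%N -> 1 < q ->
  forall x : nat -> R,
    KM q r x <-> N_alpha_q ((r%:R) `^ (q^-1)) q x.
Proof.
move=> hr hq1 x; have hq : 0 < q by apply: lt_trans hq1.
split.
- move=> hK; have [hc hE hS] := KM_fwd hr hq hK.
  split; [split|].
  + exact: hc.
  + move=> i; case: (hE i) => [->|[k [->|->]]]; [by left| |].
    * by right; exists (- k%:Z); left; rewrite -exprnN.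
    * by right; exists (- k%:Z); right; rewrite -exprnN.
  + by case: hc => N hN; exists N; split => //; exact: hS.
- by move=> hx; apply: N_to_KM hr hq _.
Qed.
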